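(* Let $G\le\operatorname{Homeo}(\mathfrak{C})$ be simple and vigorous. Let $D\in K_{\mathfrak{C}}$ and let $\gamma\in G$ satisfy $D\gamma\cap D=\varnothing$ and $D\gamma\cup D\neq\mathfrak{C}$. Let $\delta\in\operatorname{Homeo}(\mathfrak{C})$ fix every point of $\mathfrak{C}\setminus D$. Let $H=\langle G\cup\{[\delta,\gamma]\}\rangle$. Then $H$ is simple and vigorous. If moreover $G$ is finitely generated, then so is $H$.
   Context: $\mathfrak{C}$ denotes a Cantor space (a space homeomorphic to $\{0,1\}^\omega$). Groups of homeomorphisms act on the right, products composed left to right, and $[a,b]=a^{-1}b^{-1}ab$. $K_{\mathfrak{C}}$ denotes the set of non-empty proper clopen subsets of $\mathfrak{C}$. For $\gamma\in\operatorname{Homeo}(\mathfrak{C})$, $\operatorname{supp}(\gamma)=\{p\in\mathfrak{C}: p\gamma\neq p\}$. A subset $S\subseteq \operatorname{Homeo}(\mathfrak{C})$ is vigorous if for all clopen $A,B,C\subseteq\mathfrak{C}$ with $B,C$ non-empty proper subsets of $A$ there is $\gamma\in S$ with $\operatorname{supp}(\gamma)\subseteq A$ and $B\gamma\subseteq C$. *)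

(* Defs.v *)
From HB Require Import structures.
From mathcomp Require Import all_boot all_order all_algebra.
From mathcomp Require Import all_classical all_reals all_analysis.
Set Implicit Arguments. Unset Strict Implicit. Unset Printing Implicit Defensive.
Local Open Scope classical_set_scope.

Notation CS := cantor_space.

Definition homeo (f : CS -> CS) : Prop :=
  exists g : CS -> CS, [/\ cancel f g, cancel g f, continuous f & continuous g].

(* The (unique) two-sided inverse of a bijection; junk value otherwise. *)
Definition finv (f : CS -> CS) : CS -> CS :=
  match pselect (exists g : CS -> CS, cancel f g /\ cancel g f) with
  | left h => projT1 (cid h)
  | right _ => f
  end.

(* Right action, products composed left to right: p (a * b) = (p a) b. *)
Definition hmul (a b : CS -> CS) : CS -> CS := b \o a.

Definition hcomm (a b : CS -> CS) : CS -> CS :=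
  hmul (hmul (hmul (finv a) (finv b)) a) b.

Definition is_group (G : set (CS -> CS)) : Prop :=
  [/\ G `<=` homeo, G id,
      (forall a b, G a -> G b -> G (hmul a b)) &
      (forall a, G a -> G (finv a))].

Definition gen (S : set (CS -> CS)) : set (CS -> CS) :=
  \bigcap_(H in [set H | is_group H /\ S `<=` H]) H.

Definition normal_in (N G : set (CS -> CS)) : Prop :=
  forall g n, G g -> N n -> N (hmul (hmul (finv g) n) g).

Definition simple_group (G : set (CS -> CS)) : Prop :=
  is_group G /\ G <> [set id] /\
  forall N, is_group N -> N `<=` G -> normal_in N G -> N = [set id] \/ N = G.

Definition supp (g : CS -> CS) : set CS := [set p | g p <> p].

Definition vigorous (S : set (CS -> CS)) : Prop :=
  forall A B C : set CS, clopen A -> clopen B -> clopen C ->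
    B <> set0 -> C <> set0 -> B `<` A -> C `<` A ->
    exists g, S g /\ supp g `<=` A /\ g @` B `<=` C.

Definition K_C (D : set CS) : Prop := [/\ clopen D, D <> set0 & D <> setT].

Definition fin_gen (G : set (CS -> CS)) : Prop :=
  exists F : set (CS -> CS), finite_set F /\ gen F = G.

(* Main.v *)
Require Import Defs.
From mathcomp Require Import all_boot all_classical all_reals all_analysis.
Local Open Scope classical_set_scope.
Local Notation finv := Defs.finv.

Lemma homeo_can f : homeo f -> cancel f (finv f) /\ cancel (finv f) f.
Proof.
case=> g [fg gf _ _]; rewrite /finv; case: pselect => [h|nh]; last first.
  by exfalso; apply: nh; exists g.
by case: (cid h) => g' [] /=.
Qed.

Lemma finvK {f} : homeo f -> forall x, finv f (f x) = x.
Proof. by move=> /homeo_can[]. Qed.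
Lemma finvKV {f} : homeo f -> forall x, f (finv f x) = x.
Proof. by move=> /homeo_can[]. Qed.

Lemma finv_uniq f g : homeo f -> (forall x, f (g x) = x) -> finv f = g.
Proof. by move=> hf fg; apply: funext => x; rewrite -{1}(fg x) finvK. Qed.

Lemma homeo_finv {f} : homeo f -> homeo (finv f).
Proof.
move=> hf; have [g [fg gf cf cg]] := hf.
have -> : finv f = g by apply: finv_uniq => // x; rewrite gf.
by exists f; split.
Qed.

Lemma homeo_inj {f} : homeo f -> injective f.
Proof. by move=> hf x y e; rewrite -(finvK hf x) e finvK. Qed.

Lemma homeo_id : homeo id.
Proof. by exists id; split => //; move=> x; exact: cvg_id. Qed.

Lemma homeo_cont {f} : homeo f -> continuous f.
Proof. by case=> g [_ _ cf _]. Qed.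

Lemma homeo_hmul a b : homeo a -> homeo b -> homeo (hmul a b).
Proof.
move=> ha hb; exists (finv a \o finv b); split.
- by move=> x /=; rewrite /hmul /= !finvK.
- by move=> x /=; rewrite /hmul /= !finvKV.
- move=> x; apply: continuous_comp; [exact: homeo_cont | exact: homeo_cont].
- move=> x; apply: continuous_comp; apply: homeo_cont; exact: homeo_finv.
Qed.

Lemma finv_hmul a b : homeo a -> homeo b -> finv (hmul a b) = hmul (finv b) (finv a).
Proof.
move=> ha hb; apply: finv_uniq; first exact: homeo_hmul.
by move=> x; rewrite /hmul /= !finvKV.
Qed.

Lemma finv_finv a : homeo a -> finv (finv a) = a.
Proof. move=> ha; apply: finv_uniq; [exact: homeo_finv| exact: finvK]. Qed.

Lemma finv_id : finv id = id.
Proof. by apply: finv_uniq => //; exact: homeo_id. Qed.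

Lemma homeo_hcomm a b : homeo a -> homeo b -> homeo (hcomm a b).
Proof.
move=> ha hb; rewrite /hcomm.
by do 3! apply: homeo_hmul => //; apply: homeo_finv.
Qed.

Lemma finv_hcomm a b : homeo a -> homeo b -> finv (hcomm a b) = hcomm b a.
Proof.
move=> ha hb; apply: finv_uniq; first exact: homeo_hcomm.
by move=> x; rewrite /hcomm /hmul /= !(finvK ha, finvK hb, finvKV ha, finvKV hb).
Qed.

Definition conjh h x := hmul (hmul (finv h) x) h.

Lemma homeo_conjh h x : homeo h -> homeo x -> homeo (conjh h x).
Proof. by move=> hh hx; do 2! apply: homeo_hmul => //; apply: homeo_finv. Qed.

Lemma grp_homeo K : is_group K -> K `<=` homeo. Proof. by case. Qed.
Lemma grp_id K : is_group K -> K id. Proof. by case. Qed.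
Lemma grp_mul K a b : is_group K -> K a -> K b -> K (hmul a b).
Proof. by case=> _ _ m _; apply: m. Qed.
Lemma grp_inv K a : is_group K -> K a -> K (finv a).
Proof. by case=> _ _ _ i; apply: i. Qed.
Lemma grp_conj K h x : is_group K -> K h -> K x -> K (conjh h x).
Proof.
move=> gK Kh Kx; apply: grp_mul => //; apply: grp_mul => //; exact: grp_inv.
Qed.
Lemma grp_comm K a b : is_group K -> K a -> K b -> K (hcomm a b).
Proof.
move=> gK Ka Kb; rewrite /hcomm.
by do 3! apply: grp_mul => //; apply: grp_inv.
Qed.

Lemma is_group_homeo : is_group homeo.
Proof.
split => //; [exact: homeo_id | exact: homeo_hmul | move=> a; exact: homeo_finv].
Qed.

Lemma gen_sub S K : is_group K -> S `<=` K -> gen S `<=` K.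
Proof. by move=> gK SK x gx; apply: gx; split. Qed.

Lemma sub_gen S : S `<=` gen S.
Proof. by move=> x Sx K [_ SK]; apply: SK. Qed.

Lemma gen_group S : S `<=` homeo -> is_group (gen S).
Proof.
move=> Sh; split.
- exact: gen_sub is_group_homeo Sh.
- by move=> K [gK _]; exact: grp_id.
- by move=> a b ga gb K [gK SK]; apply: grp_mul => //; [apply: ga | apply: gb].
- by move=> a ga K [gK SK]; apply: grp_inv => //; apply: ga.
Qed.

Lemma normal_conj N G g n : normal_in N G -> G g -> N n -> N (conjh g n).
Proof. by move=> nN Gg Nn; apply: nN. Qed.

Lemma commute_out (f g : CS -> CS) (V : set CS) :
  injective f -> injective g -> (forall p, ~ V p -> f p = p) ->
  (forall p, V p -> g p = p) -> forall p, f (g p) = g (f p).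
Proof.
move=> fi gi fV gV p.
have [Vp|nVp] := pselect (V p).
  rewrite gV //; have [Vfp|nVfp] := pselect (V (f p)); first by rewrite gV.
  have := fV _ nVfp => /fi fpp; by rewrite fpp in nVfp; exfalso; apply: nVfp.
rewrite [f p]fV //; have [Vgp|nVgp] := pselect (V (g p)).
  by have := gV _ Vgp => /gi gpp; rewrite gpp in Vgp; exfalso; apply: nVp.
by rewrite fV.
Qed.

Lemma image_homeo f (A : set CS) : homeo f -> f @` A = finv f @^-1` A.
Proof.
move=> hf; apply/seteqP; split => x.
  by case=> y Ay <-; rewrite /preimage /= finvK.
by rewrite /preimage /= => Ax; exists (finv f x) => //; rewrite finvKV.
Qed.

Lemma clopen_image f (A : set CS) : homeo f -> clopen A -> clopen (f @` A).
Proof.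
move=> hf cA; rewrite image_homeo //; apply: preimage_clopen => //.
exact/homeo_cont/homeo_finv.
Qed.

Lemma sep (p q : CS) : p <> q -> exists W, [/\ clopen W, W p & ~ W q].
Proof.
move=> pq; have pq' : p != q by apply/eqP.
have [U [cU Up Uq]] := cantor_zero_dimensional pq'.
by exists U.
Qed.

Lemma other_point (V : set CS) (p : CS) : open V -> V p -> exists q, q <> p /\ V q.
Proof.
move=> oV Vp; have [_ lp] := cantor_perfect.
have : limit_point [set: CS] p by rewrite lp.
move=> /(_ V (open_nbhs_nbhs (conj oV Vp))) [y [/eqP yp _ Vy]].
by exists y.
Qed.

Lemma split3 (V : set CS) p : clopen V -> V p ->
  exists P1 P2 P3 : set CS, [/\ [/\ clopen P1, clopen P2 & clopen P3],
    [/\ P1 `<=` V, P2 `<=` V & P3 `<=` V],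
    [/\ P1 !=set0, P2 !=set0 & P3 !=set0] &
    [/\ forall x, P1 x -> ~ P2 x, forall x, P1 x -> ~ P3 x &
        forall x, P2 x -> ~ P3 x]].
Proof.
move=> cV Vp; have [q [qp Vq]] := other_point _ _ cV.1 Vp.
have [W1 [cW1 W1p W1q]] := sep _ _ (nesym qp).
have cV1 : clopen (V `&` W1) by apply: clopenI.
have [r [rp [Vr W1r]]] := other_point _ _ cV1.1 (conj Vp W1p).
have [W2 [cW2 W2p W2r]] := sep _ _ (nesym rp).
exists (V `&` ~` W1), (V `&` W1 `&` ~` W2), (V `&` W1 `&` W2); split.
- split; [apply: clopenI => //; exact: clopenC|
   apply: clopenI => //; exact: clopenC| exact: clopenI].
- by split => x [] // [].
- by split; [exists q| exists r| exists p].
- split => x.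
  + by move=> [_ nW1] [[_ W1x] _].
  + by move=> [_ nW1] [[_ W1x] _].
  + by move=> [_ nW2] [_ W2x].
Qed.

Lemma supp_fix g (A : set CS) : supp g `<=` A -> forall p, ~ A p -> g p = p.
Proof. by move=> s p nA; apply: contrapT => h; exact: nA (s _ h). Qed.

Lemma fix_inv a (A : CS -> Prop) : homeo a -> (forall p, A p -> a p = p) ->
  forall p, A p -> finv a p = p.
Proof. by move=> ha h p nA; rewrite -{1}(h p nA) finvK. Qed.

Lemma ne0 (P : set CS) : P !=set0 -> P <> set0.
Proof. by move=> [x Px] e; rewrite e in Px. Qed.

Lemma not_id n : n <> id -> exists p : CS, n p <> p.
Proof.
move=> nid; apply: contrapT => h; apply: nid; apply: funext => p.
by apply: contrapT => np; apply: h; exists p.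
Qed.

Lemma step1 G N : simple_group G -> vigorous G -> is_group N ->
  (forall g n, G g -> N n -> N (conjh g n)) ->
  (exists n, N n /\ n <> id) -> G `<=` N.
Proof.
move=> [gG [Gn1 sG]] vG gN nN [n [Nn n1]].
have hn : homeo n by exact: grp_homeo Nn.
pose GN := G `&` N.
have gGN : is_group GN.
  split.
  - by move=> x [Gx _]; exact: grp_homeo Gx.
  - by split; apply: grp_id.
  - by move=> a b [Ga Na] [Gb Nb]; split; apply: grp_mul.
  - by move=> a [Ga Na]; split; apply: grp_inv.
have nGN : normal_in GN G.
  by move=> g x Gg [Gx Nx]; split; [exact: grp_conj | exact: nN].
have [GN1|GNG] := sG GN gGN (fun x (h : GN x) => proj1 h) nGN; last first.
  by rewrite -GNG => x [].
exfalso.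
have [p np] := not_id _ n1.
have [W [cW Wp Wnp]] := sep _ _ (nesym np).
pose V := W `&` (n @^-1` ~` W).
have cV : clopen V.
  apply: clopenI => //; apply: preimage_clopen; [exact: clopenC|exact: homeo_cont].
have Vp : V p by split.
have Vd v : V v -> ~ V (n v) by move=> [_ h] [].
have [P1 [P2 [P3 [[c1 c2 c3] [s1 s2 s3] [[x1 h1] [x2 h2] [x3 h3]] [d12 d13 d23]]]]]
  := split3 _ _ cV Vp.
have [b [Gb [sb ib]]] : exists b, G b /\ supp b `<=` V /\ b @` P1 `<=` P2.
  apply: vG => //; try (apply: ne0; by exists x1); try (apply: ne0; by exists x2).
  - by split => // /(_ x3 (s3 _ h3)) /d13; apply.
  - by split => // /(_ x3 (s3 _ h3)) /d23; apply.
pose V1 := V `&` ~` P1.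
have [a [Ga [sa ia]]] : exists a, G a /\ supp a `<=` V1 /\ a @` P2 `<=` P3.
  apply: vG => //; try (apply: ne0; by exists x2); try (apply: ne0; by exists x3).
  - by apply: clopenI => //; exact: clopenC.
  - split; first by move=> x P2x; split; [exact: s2|move/d12; apply].
    by move=> /(_ x3 (conj (s3 _ h3) (fun h => d13 _ h h3))) /d23; apply.
  - split; first by move=> x P3x; split; [exact: s3|move/d13; apply].
    by move=> /(_ x2 (conj (s2 _ h2) (fun h => d12 _ h h2))) /d23.
have ha : homeo a by exact: grp_homeo Ga.
have hb : homeo b by exact: grp_homeo Gb.
have fa := supp_fix _ _ sa; have fb := supp_fix _ _ sb.
have faV p' : ~ V p' -> a p' = p' by move=> nV; apply: fa => -[].
have fa' := fix_inv _ _ ha faV; have fb' := fix_inv _ _ hb fb.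
pose A2 := fun r => n (finv a (finv n r)).
have iA2 : injective A2.
  by move=> r s; rewrite /A2 => /(homeo_inj hn)/(homeo_inj (homeo_finv ha))
    /(homeo_inj (homeo_finv hn)).
have fA2 v : V v -> A2 v = v.
  move=> Vv; rewrite /A2 fa' ?finvKV //.
  by move=> Vn'; apply: (Vd _ Vn'); rewrite finvKV.
have cA f : injective f -> (forall p, ~ V p -> f p = p) -> forall r, f (A2 r) = A2 (f r).
  by move=> fi fV; apply: commute_out fi iA2 fV fA2.
have cAa := cA _ (homeo_inj ha) faV.
have cAa' := cA _ (homeo_inj (homeo_finv ha)) fa'.
have cAb' := cA _ (homeo_inj (homeo_finv hb)) fb'.
pose x := hcomm (hcomm a n) b.
have Nx : N x.
  have Nan : N (hcomm a n).
    apply: grp_mul => //; apply: nN => //; exact: grp_inv.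
  change (N (hmul (finv (hcomm a n)) (conjh b (hcomm a n)))).
  apply: grp_mul => //; first exact: grp_inv.
  by apply: nN.
have ex : x = hcomm (finv a) b.
  apply: funext => r.
  change (b (hcomm a n (finv b (finv (hcomm a n) r))) = hcomm (finv a) b r).
  rewrite finv_hcomm // /hcomm /hmul /= finv_finv //.
  have := cAa r; rewrite /A2 => ->.
  have := cAb' (a r); rewrite /A2 => ->.
  have := cAa' (finv b (a r)); rewrite /A2 => ->.
  by rewrite !(finvK hn, finvKV hn, finvK ha, finvKV ha).
have Gx : G x by rewrite ex; apply: grp_comm => //; exact: grp_inv.
have : GN x by [].
rewrite GN1 /= ex => e.
have e1 r : b (finv a (finv b (a r))) = r.
  by have := congr1 (fun f => f r) e; rewrite /hcomm /hmul /= finv_finv.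
have e2 q : a (b q) = b (a q).
  have h r : finv b (a r) = a (finv b r).
    have := e1 r; move/(congr1 (finv b)); rewrite !finvK // => h.
    by rewrite -h finvKV.
  by rewrite -[LHS](finvKV hb) h finvK.
have P2b : P2 (b x1) by apply: ib; exact: imageP.
have P3ab : P3 (a (b x1)) by apply: ia; exact: imageP.
rewrite e2 (fa x1) in P3ab; last by move=> [].
exact: d23 P2b P3ab.
Qed.

Definition Kp (G N : set (CS -> CS)) delta := [set g | G g /\ N (hcomm delta g)].

Lemma Kp_group G N delta : is_group G -> is_group N -> G `<=` N ->
  (forall g n, G g -> N n -> N (conjh g n)) -> homeo delta -> is_group (Kp G N delta).
Proof.
move=> gG gN GN nN hd; split.
- by move=> g [Gg _]; exact: grp_homeo Gg.
- split; first exact: grp_id.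
  have -> : hcomm delta id = id.
    by apply: funext => p; rewrite /hcomm /hmul /= finv_id /= finvKV.
  exact: grp_id.
- move=> g h [Gg Ng] [Gh Nh]; split; first exact: grp_mul.
  have hg : homeo g by exact: grp_homeo Gg.
  have hh : homeo h by exact: grp_homeo Gh.
  have -> : hcomm delta (hmul g h) = hmul (hcomm delta h) (conjh h (hcomm delta g)).
    apply: funext => p; rewrite /hcomm /conjh /hmul /= finv_hmul //= /hmul /=.
    by rewrite !(finvK hh, finvK hd, finvKV hd).
  by apply: grp_mul => //; apply: nN.
- move=> g [Gg Ng]; split; first exact: grp_inv.
  have hg : homeo g by exact: grp_homeo Gg.
  have -> : hcomm delta (finv g) = conjh (finv g) (finv (hcomm delta g)).
    apply: funext => p; rewrite finv_hcomm // /hcomm /conjh /hmul /= finv_finv //.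
    by rewrite !(finvK hg).
  by apply: nN; [exact: grp_inv | exact: grp_inv].
Qed.

Lemma fixD_K G N (D : set CS) delta g : is_group N -> homeo delta ->
  (forall p, ~ D p -> delta p = p) -> G g -> homeo g -> (forall p, D p -> g p = p) ->
  Kp G N delta g.
Proof.
move=> gN hd fd Gg hg fg; split => //.
have c := commute_out _ _ D (homeo_inj hd) (homeo_inj hg) fd fg.
have -> : hcomm delta g = id.
  apply: funext => p; rewrite /hcomm /hmul /=.
  by rewrite -c finvKV // finvKV.
exact: grp_id.
Qed.

Lemma fixDg_K G N (D : set CS) delta gamma g : is_group G -> is_group N -> G `<=` N ->
  (forall n, N n -> N (conjh (finv (hcomm delta gamma)) n)) ->
  homeo delta -> homeo gamma ->
  (forall p, ~ D p -> delta p = p) -> G g -> homeo g ->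
  (forall p, (gamma @` D) p -> g p = p) -> Kp G N delta g.
Proof.
move=> gG gN GN Nc hd hga fd Gg hg fg; split => //.
pose k := fun r => finv gamma (finv g (gamma r)).
have ik : injective k.
  by move=> r s /(homeo_inj (homeo_finv hga))/(homeo_inj (homeo_finv hg))/(homeo_inj hga).
have fk p : D p -> k p = p.
  move=> Dp; rewrite /k (fix_inv _ _ hg fg) ?finvK //.
have ck := commute_out _ _ D (homeo_inj hd) ik fd fk.
have hc : homeo (hcomm delta gamma) by exact: homeo_hcomm.
have -> : hcomm delta g =
    hmul (conjh (finv (hcomm delta gamma)) (finv g)) g.
  apply: funext => p.
  rewrite /conjh finv_finv // finv_hcomm // /hcomm /hmul /=.
  have := ck (finv gamma (finv delta p)); rewrite /k; move=> <-.
  by rewrite !(finvK hd, finvKV hga).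
apply: grp_mul => //; last exact: GN.
by apply: Nc; apply: GN; exact: grp_inv.
Qed.

Lemma move_in (G P : set (CS -> CS)) (X1 X2 : set CS) :
  vigorous G -> G `<=` homeo -> clopen X1 -> clopen X2 ->
  X1 !=set0 -> X2 !=set0 -> (forall x, X1 x -> ~ X2 x) ->
  (exists e, ~ X1 e /\ ~ X2 e) ->
  (forall g, G g -> (forall p, X1 p -> g p = p) -> P g) ->
  (forall g, G g -> (forall p, X2 p -> g p = p) -> P g) ->
  (forall a b, P a -> P b -> P (hmul a b)) ->
  forall V' : set CS, clopen V' -> (exists v, V' v /\ ~ X1 v) ->
  exists m, P m /\ forall x, X1 x -> V' (m x).
Proof.
move=> vG Gh c1 c2 [x1 h1] [x2 h2] d [e [e1 e2]] P1 P2 Pm V' cV' [v [V'v nv]].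
have cE : clopen (~` X1 `&` ~` X2) by apply: clopenI; apply: clopenC.
have [m1 [Gm1 [sm1 im1]]] : exists m1, G m1 /\ supp m1 `<=` ~` X2 /\
    m1 @` X1 `<=` ~` X1 `&` ~` X2.
  apply: vG => //; try exact: clopenC.
  - by apply: ne0; exists x1.
  - by apply: ne0; exists e.
  - split; first by move=> x /d.
    by move=> /(_ e e2).
  - split; first by move=> x [].
    by move=> /(_ x1 (d _ h1)) [].
have hm1 : homeo m1 by exact: Gh.
have fm1 : forall p, X2 p -> m1 p = p.
  by move=> p X2p; apply: (supp_fix _ _ sm1) => /(_ X2p).
have Pm1 : P m1 by exact: P2.
have [U1V|nU1V] := pselect (~` X1 `<=` V').
  exists m1; split => // x X1x; apply: U1V.
  by have [] := im1 _ (imageP _ X1x).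
have [m2 [Gm2 [sm2 im2]]] : exists m2, G m2 /\ supp m2 `<=` ~` X1 /\
    m2 @` (m1 @` X1) `<=` V' `&` ~` X1.
  apply: vG => //; try exact: clopenC.
  - exact: clopen_image.
  - by apply: clopenI => //; exact: clopenC.
  - by apply: ne0; exists (m1 x1); exact: imageP.
  - by apply: ne0; exists v.
  - split; first by move=> y /im1 [].
    move=> /(_ x2 (fun h => d _ h h2)) /im1 [_]; apply; exact: h2.
  - split; first by move=> y [].
    by move=> h; apply: nU1V => y /h [].
have fm2 : forall p, X1 p -> m2 p = p.
  by move=> p X1p; apply: (supp_fix _ _ sm2) => /(_ X1p).
exists (hmul m1 m2); split; first by apply: Pm => //; exact: P1.
move=> x X1x; rewrite /hmul /=.
by have [] := im2 _ (imageP _ (imageP _ X1x)).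
Qed.

Lemma ne0' (P : set CS) : P <> set0 -> P !=set0.
Proof.
move=> h; apply: contrapT => h'; apply: h; apply/seteqP; split => x // Px.
by apply: h'; exists x.
Qed.

Lemma conjh_mul h a b : homeo h -> conjh h (hmul a b) = hmul (conjh h a) (conjh h b).
Proof. by move=> hh; apply: funext => p; rewrite /conjh /hmul /= finvK. Qed.

Lemma conjh_id h : homeo h -> conjh h id = id.
Proof. by move=> hh; apply: funext => p; rewrite /conjh /hmul /= finvKV. Qed.

Lemma finv_conjh h a : homeo h -> homeo a -> finv (conjh h a) = conjh h (finv a).
Proof.
move=> hh ha; apply: finv_uniq; first exact: homeo_conjh.
by move=> x; rewrite /conjh /hmul /= !(finvK hh, finvKV ha, finvKV hh).
Qed.

Lemma conjh_conjh h g l : homeo h -> homeo g ->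
  conjh h (conjh g l) = conjh (hmul g h) l.
Proof.
by move=> hh hg; apply: funext => p; rewrite /conjh finv_hmul // /hmul /=.
Qed.

Lemma conjh_id_l g : conjh id g = g.
Proof. by rewrite /conjh finv_id. Qed.

Lemma step2 G N D gamma delta :
  simple_group G -> vigorous G -> K_C D -> G gamma ->
  gamma @` D `&` D = set0 -> gamma @` D `|` D <> setT ->
  homeo delta -> (forall p, ~ D p -> delta p = p) ->
  is_group N -> G `<=` N -> (forall g n, G g -> N n -> N (conjh g n)) ->
  (forall n, N n -> N (conjh (finv (hcomm delta gamma)) n)) ->
  N (hcomm delta gamma).
Proof.
move=> [gG [Gn1 sG]] vG [cD D0 DT] Gga GDD GDU hd fd gN GN nN Nc.
have Gh := grp_homeo _ gG.
have hga : homeo gamma by exact: Gh.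
pose K := Kp G N delta.
have gK : is_group K by exact: Kp_group.
have [x0 Dx0] := ne0' _ D0.
have cGD : clopen (gamma @` D) by exact: clopen_image.
have GD0 : (gamma @` D) !=set0 by exists (gamma x0); exact: imageP.
have disj x : D x -> ~ (gamma @` D) x.
  by move=> Dx GDx; have : (gamma @` D `&` D) x by []; rewrite GDD.
have disj' x : (gamma @` D) x -> ~ D x by move=> h /disj; apply.
have [e [eD eGD]] : exists e, ~ D e /\ ~ (gamma @` D) e.
  apply: contrapT => h; apply: GDU; apply/seteqP; split => x // _.
  by apply: contrapT => nx; apply: h; exists x; split => ?; apply: nx; [right|left].
have fixD g : G g -> (forall p, D p -> g p = p) -> K g.
  by move=> Gg fg; apply: (fixD_K _ _ D) => //; exact: Gh.
have fixGD g : G g -> (forall p, (gamma @` D) p -> g p = p) -> K g.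
  by move=> Gg fg; apply: (fixDg_K _ _ D _ gamma) => //; exact: Gh.
have Kmul a b : K a -> K b -> K (hmul a b) by move=> Ka Kb; exact: grp_mul.
have key g (V : set CS) : G g -> clopen V -> (exists v, ~ V v) ->
    (forall p, ~ V p -> g p = p) -> K g.
  move=> Gg cV [v nVv] fg.
  have fin m (X : set CS) : K m -> (forall g, G g -> (forall p, X p -> g p = p) -> K g) ->
      (forall x, X x -> ~ V (m x)) -> K g.
    move=> Km fX mX.
    have hm : homeo m by exact: Gh (proj1 Km).
    pose g2 := hmul (hmul m g) (finv m).
    have Kg2 : K g2.
      apply: fX; first by apply: grp_mul => //; [apply: grp_mul => // | apply: grp_inv];
        exact: proj1 Km.
      by move=> p Xp; rewrite /g2 /hmul /= fg ?finvK //; exact: mX.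
    have -> : g = hmul (hmul (finv m) g2) m.
      by apply: funext => p; rewrite /g2 /hmul /= !finvKV.
    by apply: (Kmul) => //; apply: (Kmul) => //; exact: grp_inv.
  have cV' : clopen (~` V) by exact: clopenC.
  have [[w [nVw nDw]]|h] := pselect (exists w, ~ V w /\ ~ D w).
    have [m [Km mX]] := move_in G K D (gamma @` D) vG Gh cD cGD (ne0' _ D0) GD0
      disj (ex_intro _ e (conj eD eGD)) fixD fixGD Kmul (~` V) cV'
      (ex_intro _ w (conj nVw nDw)).
    exact: (fin m D).
  have Dv : D v by apply: contrapT => nDv; apply: h; exists v.
  have [m [Km mX]] := move_in G K (gamma @` D) D vG Gh cGD cD GD0 (ne0' _ D0)
    disj' (ex_intro _ e (conj eGD eD)) fixGD fixD Kmul (~` V) cV'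
    (ex_intro _ v (conj nVv (disj _ Dv))).
  exact: (fin m (gamma @` D)).
have keyc g (V : set CS) h : G g -> clopen V -> (exists v, ~ V v) ->
    (forall p, ~ V p -> g p = p) -> G h -> K (conjh h g).
  move=> Gg cV [v nVv] fg Gh'.
  have hh : homeo h by exact: Gh.
  apply: (key _ (h @` V)); first exact: grp_conj.
  - exact: clopen_image.
  - exists (h v); case=> w Vw /(homeo_inj hh) wv; apply: nVv; by rewrite -wv.
  - move=> p nVp; rewrite /conjh /hmul /= fg ?finvKV //.
    by move=> Vp; apply: nVp; exists (finv h p) => //; rewrite finvKV.
pose L := [set g | G g /\ forall h, G h -> K (conjh h g)].
have gL : is_group L.
  split.
  - by move=> g [Gg _]; exact: Gh.
  - split; first exact: grp_id.
    by move=> h Gh'; rewrite conjh_id; [exact: grp_id | exact: Gh].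
  - move=> a b [Ga La] [Gb Lb]; split; first exact: grp_mul.
    by move=> h Gh'; rewrite conjh_mul; [apply: (Kmul); [exact: La|exact: Lb]|exact: Gh].
  - move=> a [Ga La]; split; first exact: grp_inv.
    move=> h Gh'; rewrite -finv_conjh; [|exact: Gh|exact: Gh].
    by apply: grp_inv => //; exact: La.
have nL : normal_in L G.
  move=> g l Gg [Gl Ll]; split; first exact: grp_conj.
  move=> h Gh'; rewrite conjh_conjh; [|exact: Gh|exact: Gh].
  by apply: Ll; exact: grp_mul.
have [m1 [Gm1 [sm1 im1]]] : exists m1, G m1 /\ supp m1 `<=` ~` (gamma @` D) /\
    m1 @` D `<=` ~` D `&` ~` (gamma @` D).
  apply: vG => //; try exact: clopenC.
  - by apply: clopenI; apply: clopenC.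
  - by apply: ne0; exists e.
  - split; first by move=> x /disj.
    by move=> /(_ e eGD).
  - split; first by move=> x [].
    by move=> /(_ x0 (disj _ Dx0)) [].
have Lm1 : L m1.
  split => // h Gh'; apply: (keyc _ (~` (gamma @` D))) => //.
  - exact: clopenC.
  - by case: GD0 => y GDy; exists y; apply.
  - by move=> p Hp; apply: (supp_fix _ _ sm1); move=> H; apply: Hp.
have [L1|LG] := sG L gL (fun x (h : L x) => proj1 h) nL.
  have : L m1 by [].
  rewrite L1 /= => m1id.
  by have [] := im1 _ (imageP _ Dx0); rewrite m1id.
have : L gamma by rewrite LG.
case=> _ /(_ id (grp_id _ gG)); rewrite conjh_id_l.
by case.
Qed.

Theorem proposition2p19 (G : set (CS -> CS)) (D : set CS) (gamma delta : CS -> CS) :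
  simple_group G -> vigorous G ->
  K_C D -> G gamma ->
  gamma @` D `&` D = set0 -> gamma @` D `|` D <> setT ->
  homeo delta -> (forall p, ~ D p -> delta p = p) ->
  let H := gen (G `|` [set hcomm delta gamma]) in
  (simple_group H /\ vigorous H) /\ (fin_gen G -> fin_gen H).
Proof.
move=> sG vG KD Gga GDD GDU hd fd H.
have [gG [Gn1 _]] := sG.
have Gh := grp_homeo _ gG.
have hc : homeo (hcomm delta gamma) by apply: homeo_hcomm => //; exact: Gh.
have Sh : G `|` [set hcomm delta gamma] `<=` homeo.
  by move=> x [/Gh|->].
have gH : is_group H by exact: gen_group.
have GH : G `<=` H by move=> x Gx; apply: sub_gen; left.
have cH : H (hcomm delta gamma) by apply: sub_gen; right.
split; [split|].
- split => //; split.
    move=> e; apply: Gn1; apply/seteqP; split => x.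
      by move/GH; rewrite e.
    by move=> ->; exact: grp_id.
  move=> N gN NH nNH.
  have [[n [Nn n1]]|h] := pselect (exists n, N n /\ n <> id).
    right.
    have GN : G `<=` N.
      apply: (step1 _ _ sG vG gN) => //; last by exists n.
      by move=> g m Gg Nm; exact: (nNH g m (GH _ Gg) Nm).
    have Nc : N (hcomm delta gamma).
      apply: (step2 G N D gamma delta sG vG KD Gga GDD GDU hd fd gN GN).
        by move=> g m Gg Nm; exact: (nNH g m (GH _ Gg) Nm).
      by move=> m Nm; exact: (nNH _ m (grp_inv _ _ gH cH) Nm).
    apply/seteqP; split => //.
    by apply: gen_sub => // x [/GN|->].
  left; apply/seteqP; split => x.
    by move=> Nx; apply: contrapT => nx; apply: h; exists x.
  by move=> ->; exact: grp_id.
- move=> A B C cA cB cC B0 C0 BA CA.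
  have [g [Gg [s i]]] := vG A B C cA cB cC B0 C0 BA CA.
  by exists g; split => //; exact: GH.
- move=> [F [fF eF]]; exists (F `|` [set hcomm delta gamma]); split.
    by rewrite finite_setU; split => //; exact: finite_set1.
  have FG : F `<=` G by rewrite -eF; exact: sub_gen.
  have F'h : F `|` [set hcomm delta gamma] `<=` homeo.
    by move=> x [/FG/Gh|->].
  have gF' := gen_group _ F'h.
  apply/seteqP; split.
    by apply: gen_sub => // x [/FG/GH|->].
  apply: gen_sub => // x [Gx|->]; last by apply: sub_gen; right.
  rewrite -eF in Gx; apply: (gen_sub _ _ gF' _ _ Gx).
  by move=> y Fy; apply: sub_gen; left.
Qed.
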